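(* There exist constants $\beta\in(0,1)$, $C>0$ and $c>0$ such that for every $m>0$, every odd $n\ge5$, every $\epsilon\in(0,1)$ with $n\epsilon\ge C$, and every $\epsilon$-differentially private mechanism $\mathcal{M}:V^n\to V$, there is some $D\in\mathcal{CTM}$ with $$\mathrm{SWDIFF}(D,\mathcal{M}(D))\ge c\,\frac{m}{n\epsilon^2}\left(\ln\frac1\beta\right)^2$$ with probability at least $\beta$.
   Context: $V=[-m/2,m/2]$. A dataset is $D=(x_1,\dots,x_n)\in V^n$ (a multiset), indexed so that $x_1\le\dots\le x_n$, with median (optimal location) $\mathcal{T}(D)=x_{\lceil n/2\rceil}$. $\mathrm{SWDIFF}(D,\ell)=\sum_{i=1}^n|x_i-\ell|-\sum_{i=1}^n|x_i-\mathcal{T}(D)|$. $\mathcal{CTM}$ is the set of datasets with $|x_{i+1}-x_i|\ge|x_{j+1}-x_j|$ for all $1\le i<j\le\lceil n/2\rceil-1$ and $|x_i-x_{i-1}|\ge|x_j-x_{j-1}|$ for all $\lceil n/2\rceil+1\le j<i\le n$. Two datasets are neighboring if, as multisets, they differ in exactly one element; $\mathcal{M}$ is $\epsilon$-differentially private if $\Pr[\mathcal{M}(D)\in S]\le e^{\epsilon}\Pr[\mathcal{M}(D')\in S]$ for all neighboring $D,D'$ and measurable $S\subseteq V$. *)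

(* Defs.v *)
From HB Require Import structures.
From mathcomp Require Import all_boot all_order all_algebra.
From mathcomp Require Import all_classical all_reals all_analysis.
From mathcomp Require Import Rstruct Rstruct_topology.
Set Implicit Arguments. Unset Strict Implicit. Unset Printing Implicit Defensive.
Import Order.TTheory GRing.Theory Num.Theory.
Local Open Scope ring_scope.
Local Open Scope classical_set_scope.

Notation RR := Rdefinitions.R.
Notation RB := (measurableTypeR RR).

Definition Vset (m : RR) : set RR := `[- (m / 2), m / 2]%classic.

(* A dataset of size n with all entries in V (order of the tuple irrelevant:
   datasets are multisets, see [mech_sym]). *)
Definition in_V (m : RR) (n : nat) (D : n.-tuple RR) : Prop :=
  forall i : 'I_n, tnth D i \in `[- (m / 2), m / 2].

(* sorted version x_1 <= ... <= x_n ; 1-based access x i = nth 0 (sort D) (i-1) *)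
Definition sorted_ds (n : nat) (D : n.-tuple RR) : seq RR :=
  sort (fun x y : RR => x <= y) D.
Definition xi (n : nat) (D : n.-tuple RR) (i : nat) : RR :=
  nth 0 (sorted_ds D) i.-1.

Definition half_up (n : nat) : nat := uphalf n.

(* optimal location: the median x_{ceil(n/2)} *)
Definition medianT (n : nat) (D : n.-tuple RR) : RR := xi D (half_up n).

Definition SWDIFF (n : nat) (D : n.-tuple RR) (l : RR) : RR :=
  \sum_(i < n) `|tnth D i - l| - \sum_(i < n) `|tnth D i - medianT D|.

Definition CTM (n : nat) (D : n.-tuple RR) : Prop :=
  (forall i j : nat, (1 <= i)%N -> (i < j)%N -> (j <= (half_up n).-1)%N ->
     `|xi D i.+1 - xi D i| >= `|xi D j.+1 - xi D j|) /\
  (forall i j : nat, ((half_up n).+1 <= j)%N -> (j < i)%N -> (i <= n)%N ->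
     `|xi D i - xi D i.-1| >= `|xi D j - xi D j.-1|).

(* neighboring datasets: as multisets they differ in (at most) one element,
   i.e. one is obtained from the other by replacing one entry. *)
Definition neighboring (n : nat) (D D' : n.-tuple RR) : Prop :=
  exists (s : seq RR) (x y : RR), perm_eq D (x :: s) /\ perm_eq D' (y :: s).

Definition is_mechanism (m : RR) (n : nat) (M : n.-tuple RR -> probability RB RR) : Prop :=
  (forall D : n.-tuple RR, in_V m D -> M D (Vset m) = 1%E) /\
  (* defined on multisets: invariant under reordering the dataset *)
  (forall D D' : n.-tuple RR, perm_eq D D' -> M D = M D').

Definition eps_DP (m eps : RR) (n : nat) (M : n.-tuple RR -> probability RB RR) : Prop :=
  forall D D' : n.-tuple RR, in_V m D -> in_V m D' -> neighboring D D' ->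
  forall S : set RB, measurable S -> S `<=` Vset m ->
    (M D S <= (expR eps)%:E * M D' S)%E.

(* Main.v *)
Require Import Defs.
From HB Require Import structures.
From mathcomp Require Import all_boot all_order all_algebra.
From mathcomp Require Import all_classical all_reals all_analysis.
From mathcomp Require Import Rstruct Rstruct_topology.
From mathcomp Require Import ring lra zify.
Import Order.TTheory GRing.Theory Num.Theory.
Local Open Scope ring_scope.
Local Open Scope classical_set_scope.

Lemma size_mi (f : nat -> RR) q n : size (map f (iota q n)) == n.
Proof. by rewrite size_map size_iota. Qed.

Definition apt (n : nat) (f : nat -> RR) (q : nat) : n.-tuple RR := Tuple (size_mi f q n).

Lemma tnth_apt n f q (i : 'I_n) : tnth (apt n f q) i = f (q + i)%N.
Proof. by rewrite (tnth_nth 0) /= (nth_map 0) ?size_iota // nth_iota. Qed.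

Lemma xi_apt n f q i : (forall a b, (a <= b)%N -> f a <= f b) -> (1 <= i <= n)%N ->
  xi (apt n f q) i = f (q + i.-1)%N.
Proof.
move=> fm /andP[i1 iN].
rewrite /xi /sorted_ds sorted_sort; last first.
  rewrite /= sorted_map; apply: (sub_sorted _ (iota_sorted q n)) => a b /= ab; exact: fm.
  exact: le_trans.
rewrite /= (nth_map 0) ?size_iota ?nth_iota //; lia.
Qed.

Lemma sum3 (F : nat -> RR) (n a p r : nat) c1 c2 c3 : n = (a + p + r)%N ->
 (forall i, (i < a)%N -> c1 <= F i) -> (forall i, (a <= i < a + p)%N -> c2 <= F i) ->
 (forall i, (a + p <= i < a + p + r)%N -> c3 <= F i) ->
 a%:R * c1 + p%:R * c2 + r%:R * c3 <= \sum_(i < n) F i.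
Proof.
move=> -> h1 h2 h3.
have E1 : forall (x : RR) u w, (u <= w)%N -> \sum_(u <= i < w) x = (w - u)%:R * x.
  by move=> x u w _; rewrite sumr_const_nat mulr_natl.
rewrite -(big_mkord xpredT) (@big_cat_nat _ _ _ (a + p)) ?leq_addr //.
rewrite (@big_cat_nat _ _ _ a) ?leq_addr //=.
apply: lerD; first apply: lerD.
- rewrite -{1}(subn0 a) -E1 //; apply: ler_sum_nat => i /andP[_]; exact: h1.
- rewrite -{1}(addKn a p) -E1 ?leq_addr //; apply: ler_sum_nat => i; exact: h2.
- rewrite -{1}(addKn (a + p) r) -E1 ?leq_addr //; apply: ler_sum_nat => i; exact: h3.
Qed.

Definition vf (m s : RR) (p : nat) : RR := -(m/2) + (p%:R + 1) * s.

Lemma vD m s a b : vf m s a - vf m s b = (a%:R - b%:R) * s.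
Proof. rewrite /vf; ring. Qed.

Lemma vmono m s a b : 0 <= s -> (a <= b)%N -> vf m s a <= vf m s b.
Proof.
move=> s0 ab; rewrite -subr_ge0 vD; apply: mulr_ge0 => //.
by rewrite subr_ge0 ler_nat.
Qed.

Lemma SW_apt n f q l : SWDIFF (apt n f q) l =
  \sum_(i < n) (`|f (q + i)%N - l| - `|f (q + i)%N - medianT (apt n f q)|).
Proof. by rewrite /SWDIFF -sumrB; apply: eq_bigr => i _; rewrite tnth_apt. Qed.

Lemma med_apt n f q h : (forall a b, (a <= b)%N -> f a <= f b) -> n = h.*2.+1 ->
  medianT (apt n f q) = f (q + h)%N.
Proof.
move=> fm nE; rewrite /medianT xi_apt //; last by rewrite /half_up nE /= half_double; lia.
by rewrite /half_up nE /= half_double.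
Qed.

Lemma bound0 (m s : RR) (n h j r : nat) l : 0 < s -> n = h.*2.+1 -> h = (j + r)%N ->
  vf m s h <= l -> 2 * (j%:R * s) <= l - vf m s h ->
  j.+1%:R * (l - vf m s h) <= SWDIFF (apt n (vf m s) 0) l.
Proof.
move=> s0 nE hE lh tj.
have fm := fun a b => @vmono m s a b (ltW s0).
rewrite SW_apt (med_apt n (vf m s) 0 h fm nE) add0n.
set t := l - vf m s h.
apply: le_trans (sum3 (fun i => `|vf m s i - l| - `|vf m s i - vf m s h|) n h.+1 j r t 0 (- t) _ _ _ _); last first.
- move=> i /andP[ia _].
  have tri := ler_distD l (vf m s i) (vf m s h).
  rewrite (ger0_norm (x := l - _)) ?subr_ge0 // in tri.
  by rewrite /t; lra.
- move=> i /andP[ia ib].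
  have w0 : 0 <= vf m s i - vf m s h by rewrite subr_ge0 fm //; lia.
  have wj : vf m s i - vf m s h <= j%:R * s.
    rewrite vD ler_wpM2r ?(ltW s0) // lerBlDl -natrD ler_nat; lia.
  rewrite (ger0_norm w0) ler0_norm; last by rewrite /t in tj; lra.
  by rewrite /t in tj; lra.
- move=> i ih.
  have w0 : vf m s i <= vf m s h by rewrite fm //; lia.
  rewrite ler0_norm ?subr_le0 ?(le_trans w0) // ler0_norm ?subr_le0 //.
  by rewrite /t; lra.
- lia.
- rewrite hE -!natr1 natrD; rewrite le_eqVlt; apply/orP; left; apply/eqP; ring.
Qed.

Lemma boundk (m s : RR) (n h j r k : nat) l : 0 < s -> n = h.*2.+1 -> h = (j + r)%N ->
  l <= vf m s (k + h) -> 2 * (j%:R * s) <= vf m s (k + h) - l ->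
  j.+1%:R * (vf m s (k + h) - l) <= SWDIFF (apt n (vf m s) k) l.
Proof.
move=> s0 nE hE lh tj.
have fm := fun a b => @vmono m s a b (ltW s0).
rewrite SW_apt (med_apt n (vf m s) k h fm nE).
set t := vf m s (k + h) - l.
apply: le_trans (sum3 (fun i => `|vf m s (k + i) - l| - `|vf m s (k + i) - vf m s (k + h)|) n r j h.+1 (- t) 0 t _ _ _ _); last first.
- move=> i /andP[ia _].
  have w0 : vf m s (k + h) <= vf m s (k + i) by rewrite fm //; lia.
  rewrite ger0_norm ?subr_ge0 ?(le_trans lh) // ger0_norm ?subr_ge0 //.
  by rewrite /t; lra.
- move=> i /andP[ia ib].
  have w0 : 0 <= vf m s (k + h) - vf m s (k + i) by rewrite subr_ge0 fm //; lia.
  have wj : vf m s (k + h) - vf m s (k + i) <= j%:R * s.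
    rewrite vD ler_wpM2r ?(ltW s0) // lerBlDl -natrD ler_nat; lia.
  rewrite (distrC (vf m s (k + i)) (vf m s (k + h))) (ger0_norm w0) ger0_norm; last by rewrite /t in tj; lra.
  by rewrite /t in tj; lra.
- move=> i ih.
  have tri := ler_distD l (vf m s (k + i)) (vf m s (k + h)).
  rewrite (distrC l) (ger0_norm (x := vf m s (k + h) - l)) ?subr_ge0 // in tri.
  by rewrite /t; lra.
- lia.
- rewrite hE -!natr1 natrD; rewrite le_eqVlt; apply/orP; left; apply/eqP; ring.
Qed.

Lemma meas_SW (n : nat) (D : n.-tuple RR) (T : RR) :
  measurable [set l : RB | T <= SWDIFF D l].
Proof.
have mf : measurable_fun (setT : set RB) (SWDIFF D : RB -> RB).
  rewrite /SWDIFF; apply: measurable_realfun.measurable_funB; last exact: measurable_cst.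
  apply: (@measurable_sum _ _ _ _ _ (index_enum 'I_n) (fun i (l : RB) => `|tnth D i - l|)) => i.
  apply: (measurableT_comp (@measurable_realfun.normr_measurable RR setT)).
  apply: measurable_realfun.measurable_funB; [exact: measurable_cst | exact: measurable_id].
have := mf measurableT _ (measurable_itv `[T, +oo[%R).
rewrite setTI; congr measurable; apply/seteqP; split => x /=; rewrite in_itv /= andbT //.
Qed.

Lemma arith (m n k eps s t J : RR) : 0 < m -> 0 < n -> 0 < eps -> 1 < 2*k*eps -> k <= n -> 0 < k ->
  s * (n + k) = m -> k*s/2 <= t -> k <= 4*J -> m / (64*n*eps^+2) <= J * t.
Proof.
move=> m0 n0 e0 ke kn k0 sE kt kJ.
have s0 : 0 < s.
  have nk : 0 < n + k by lra.
  by rewrite -(pmulr_lgt0 _ nk) sE.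
have h1 : k*s/2 * (k/4) <= t * J.
  apply: ler_pM => //; first by apply: divr_ge0; [apply: mulr_ge0; lra| lra].
  - by apply: divr_ge0; lra.
  - lra.
have p0 : 0 < 64*n*eps^+2 by apply: mulr_gt0; [lra| apply: exprn_gt0].
rewrite ler_pdivrMr // mulrC.
have x2 : 1 <= 4 * (k*eps)^+2 by nra.
have : m <= k*s/2 * (k/4) * (64*n*eps^+2).
  have -> : k*s/2 * (k/4) * (64*n*eps^+2) = 8 * n * s * (k*eps)^+2 by field.
  rewrite -sE.
  have sn : 0 < s * n by apply: mulr_gt0.
  have := ler_wpM2l (ltW sn) x2; rewrite mulr1 => hh.
  have : s * k <= s * n by rewrite ler_pM2l.
  move=> hk.
  have -> : 8 * n * s * (k * eps) ^+ 2 = 2 * (s * n * (4 * (k * eps) ^+ 2)) by ring.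
  lra.
move=> hm; apply: le_trans hm _.
rewrite [_ * (J * t)]mulrC (mulrC J); apply: ler_wpM2r; [exact: ltW | exact: h1].
Qed.

From Stdlib Require Rpower.
Ltac nlia := repeat (match goal with H : _ |- _ => clear H end); lia.

Lemma natfacts k n h : (4*k <= n)%N -> n = h.*2.+1 ->
  [/\ (4 * (k %/ 4) <= k)%N, (k < 4 * (k %/ 4) + 4)%N & (k %/ 4 <= h)%N].
Proof. move=> a b; split; lia. Qed.

Lemma prob_arith (a b c d : \bar RR) (x : RR) : (0 <= a)%E -> (0 <= b)%E -> (0 <= c)%E ->
  (a + b = 1)%E -> (b < (1/4)%:E)%E -> (a <= x%:E * c)%E -> (c <= d)%E -> 0 <= x <= 3 ->
  ((1/4)%:E <= d)%E.
Proof.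
move=> + + + + + + + /andP[x0 x3].
case: a => [a| |] //; case: b => [b| |] //; case: c => [c| |] //; case: d => [d| |] //=;
 rewrite ?lee_fin ?lte_fin // => a0 b0 c0; try (by move/eqP; rewrite eqe => /eqP -> ); try by [].
- move=> /eqP; rewrite -EFinD eqe => /eqP ab b4 axc cd.
  have : x * c <= 3 * c by rewrite ler_wpM2r.
  lra.
- by move=> *; rewrite leey.
- by move=> *; rewrite leey.
Qed.
Lemma final_step (m mid x : RR) (P0 Pk : probability RB RR) (B0 Bk : set RB) :
  measurable B0 -> measurable Bk -> - (m/2) <= mid -> mid <= m/2 ->
  P0 (Vset m) = 1%E -> (forall l, mid <= l -> B0 l) -> (forall l, l <= mid -> Bk l) ->
  (forall S : set RB, measurable S -> S `<=` Vset m -> (P0 S <= x%:E * Pk S)%E) -> 0 <= x <= 3 ->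
  ((1/4)%:E <= P0 B0)%E \/ ((1/4)%:E <= Pk Bk)%E.
Proof.
move=> mB0 mBk v1 v2 PV hB0 hBk hP hx.
case: (leP ((1/4 : RR)%:E) (P0 B0)) => h0; [by left | right].
pose A := [set` `[-(m/2), mid[%R] : set RB.
pose Bc := [set` `[mid, m/2]%R] : set RB.
have mA : measurable A by exact: measurable_itv.
have mBc : measurable Bc by exact: measurable_itv.
have AV : A `<=` Vset m.
  by move=> y; rewrite /A /Vset /= !in_itv /= => /andP[a b]; apply/andP; split; lra.
have AB : A `|` Bc = Vset m.
  apply/seteqP; split => y; rewrite /A /Bc /Vset /= !in_itv /=.
    by case=> /andP[a b]; apply/andP; split; lra.
  move=> /andP[a b]; case: (ltP y mid) => xm; [left|right]; apply/andP; split; lra.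
have AB0 : A `&` Bc = set0.
  apply/seteqP; split => y; rewrite /A /Bc /= ?in_itv //=.
  by case=> /andP[a b] /andP[c d]; lra.
have hV : (P0 A + P0 Bc = 1)%E by rewrite -measureU // AB.
have hBc : (P0 Bc <= P0 B0)%E.
  apply: le_measure; rewrite ?inE //.
  by move=> y; rewrite /Bc /= in_itv /= => /andP[a _]; apply: hB0.
have hA := hP A mA AV.
have hAk : (Pk A <= Pk Bk)%E.
  apply: le_measure; rewrite ?inE //.
  by move=> y; rewrite /A /= in_itv /= => /andP[_ a]; apply: hBk; lra.
apply: (prob_arith _ _ _ _ _ _ _ _ hV (le_lt_trans hBc h0) hA hAk hx).
- exact: measure_ge0.
- exact: measure_ge0.
- exact: measure_ge0.
Qed.

Lemma e3 : expR (1 : RR) <= 3.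
Proof. by have := Rpower.exp_le_3; rewrite RexpE => /RleP. Qed.

Theorem theorem7p22 :
  exists (beta C c : RR), 0 < beta < 1 /\ 0 < C /\ 0 < c /\
  forall (m : RR) (n : nat) (eps : RR)
         (M : n.-tuple RR -> probability RB RR),
    0 < m -> odd n -> (5 <= n)%N -> 0 < eps < 1 -> C <= n%:R * eps ->
    is_mechanism m M -> eps_DP m eps M ->
    exists D : n.-tuple RR, in_V m D /\ CTM D /\
      (beta%:E <= M D [set l : RR | (c * (m / (n%:R * eps ^+ 2)) * (ln (beta^-1)) ^+ 2
                               <= SWDIFF D l)%R])%E.
Proof.
pose L := ln (4 : RR).
have L0 : 0 < L by apply: ln_gt0; lra.
exists (1/4), 4, ((64 * L ^+ 2)^-1).
split; first by apply/andP; split; lra.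
split; first lra.
split; first by rewrite invr_gt0; apply: mulr_gt0 => //; apply: exprn_gt0.
move=> m n eps M m0 oddn n5 /andP[e0 e1] Cne [MV Mperm] DP.
have ei0 : 0 <= eps^-1 by rewrite invr_ge0 ltW.
pose k := Num.Def.trunc (eps^-1).
have /andP[kle klt] := truncn_itv ei0.
rewrite -/k in kle klt.
have ei1 : 1 <= eps^-1 by rewrite invf_ge1 // ltW.
have k1 : (1 <= k)%N by rewrite /k truncn_ge_nat.
have k1r : 1 <= k%:R :> RR by rewrite ler1n.
have keps : k%:R * eps <= 1 by rewrite -ler_pdivlMr // div1r.
have k2 : 1 < 2 * k%:R * eps.
  have h2 : eps^-1 < 2 * k%:R by rewrite -natr1 in klt; lra.
  have h3 : eps^-1 * eps < 2 * k%:R * eps by rewrite ltr_pM2r.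
  by rewrite mulVf ?gt_eqF in h3.
have k4n : (4 * k <= n)%N.
  rewrite -(ler_nat RR) natrM.
  have h4 : 4 / eps <= n%:R by rewrite ler_pdivrMr.
  apply: le_trans h4; rewrite ler_pM2l //; lra.
pose h := n./2.
have nE : n = h.*2.+1.
  have hh := odd_double_half n; rewrite oddn add1n in hh.
  by rewrite -{1}hh.
clearbody k h.
have [j4 j4' jh] := natfacts k n h k4n nE.
pose j := (k %/ 4)%N.
rewrite -/j in j4 j4' jh.
clearbody j.
pose r := (h - j)%N.
have hE : h = (j + r)%N by rewrite /r; move: jh; nlia.

have nk0 : 0 < (n + k)%:R :> RR by rewrite ltr0n; move: k1; nlia.
pose s := m / (n + k)%:R.
have s0 : 0 < s by rewrite /s divr_gt0.
have ms : s * (n + k)%:R = m by rewrite /s mulrVK ?unitfE ?gt_eqF.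
pose E q := apt n (vf m s) q.
have fm := fun a b => @vmono m s a b (ltW s0).
have inV : forall q, (q <= k)%N -> in_V m (E q).
  move=> q qk i; rewrite tnth_apt; apply/mem_set; rewrite /= in_itv /=; apply/andP; split.
    rewrite /vf lerDl; apply: mulr_ge0; [by rewrite natr1 ler0n| exact: ltW].
  have : ((q + i)%:R + 1) * s <= (n + k)%:R * s.
    by rewrite ler_pM2r // natr1 ler_nat; move: (ltn_ord i) qk; nlia.
  rewrite [(n + k)%:R * s]mulrC ms /vf => hh; lra.
have nb : forall q, neighboring (E q) (E q.+1).
  move=> q; exists (map (vf m s) (iota q.+1 h.*2)), (vf m s q), (vf m s (q + h.*2.+1)).
  split; first by rewrite /= nE /=.
  rewrite /= nE.
  have -> : iota q.+1 h.*2.+1 = iota q.+1 h.*2 ++ [:: (q.+1 + h.*2)%N] by rewrite -[h.*2.+1]addn1 iotaD.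
  by rewrite map_cat cats1 perm_rcons addSnnS.
have chain : forall S : set RB, measurable S -> S `<=` Vset m -> forall q, (q <= k)%N ->
    (M (E 0%N) S <= (expR (q%:R * eps))%:E * M (E q) S)%E.
  move=> S mS SV; elim=> [|q IH] qk.
    by rewrite mul0r exp.expR0 mul1e.
  have qk' : (q <= k)%N by apply: leq_trans qk.
  apply: le_trans (IH qk') _.
  have := DP (E q) (E q.+1) (inV q qk') (inV q.+1 qk) (nb q) S mS SV.
  have e0' : (0 <= (expR (q%:R * eps))%:E)%E by rewrite lee_fin expR_ge0.
  move=> /(lee_wpmul2l e0') H; apply: le_trans H _.
  by rewrite muleA -EFinM -exp.expRD -natr1 mulrDl mul1r.
have gap : forall q i, (1 <= i < n)%N -> `|xi (E q) i.+1 - xi (E q) i| = s.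
  move=> q i hi.
  rewrite !xi_apt //; try by move: hi; nlia.
  rewrite /= vD (_ : (q + i)%N = (q + i.-1).+1); last by move: hi; nlia.
  rewrite -natr1 addrAC subrr add0r mul1r ger0_norm //; exact: ltW.
have gap2 : forall q i, (2 <= i <= n)%N -> `|xi (E q) i - xi (E q) i.-1| = s.
  move=> q i hi; have := gap q i.-1; rewrite prednK; last by move: hi; nlia.
  by apply; move: hi; nlia.
have hu : half_up n = h.+1 by rewrite /half_up nE /= half_double.
have ctm : forall q, CTM (E q).
  move=> q; split.
    move=> a b a1 ab bh; rewrite hu /= in bh.
    rewrite gap ?gap //; move: a1 ab bh; rewrite nE; nlia.
  move=> a b hb ba an; rewrite hu in hb.
  rewrite gap2 ?gap2 //; move: hb ba an; rewrite nE; nlia.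
have L4 : ln ((1/4 : RR)^-1) = L by rewrite div1r invrK.
pose T := (64 * L ^+ 2)^-1 * (m / (n%:R * eps ^+ 2)) * ln ((1/4 : RR)^-1) ^+ 2.
have n0 : 0 < n%:R :> RR by rewrite nE ltr0Sn.
have TE : T = m / (64 * n%:R * eps^+2).
  rewrite /T L4; field; apply/and3P; split; rewrite ?gt_eqF //; lra.
have kn : k%:R <= n%:R :> RR by rewrite ler_nat; move: k4n; nlia.
have k0 : 0 < k%:R :> RR by lra.
pose mid := vf m s h + k%:R * s / 2.
have vkh : vf m s (k + h) = vf m s h + k%:R * s.
  by apply/eqP; rewrite -subr_eq0 opprD addrA vD natrD; apply/eqP; ring.
have jsk : 2 * (j%:R * s) <= k%:R * s / 2.
  have : (4 * j)%:R <= k%:R :> RR by rewrite ler_nat.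
  rewrite natrM => h4.
  have : 4%:R * j%:R * s <= k%:R * s by rewrite ler_pM2r.
  lra.
have kJ : k%:R <= 4 * j.+1%:R :> RR.
  have : k%:R <= (4 * j + 4)%:R :> RR by rewrite ler_nat ltnW.
  by rewrite natrD natrM -natr1; lra.
have msE : s * (n%:R + k%:R) = m by rewrite -natrD.
have B0 : forall l, mid <= l -> T <= SWDIFF (E 0%N) l.
  move=> l hl.
  have ks0 : 0 <= k%:R * s / 2 by apply: divr_ge0; [apply: mulr_ge0; lra| lra].
  apply: le_trans (bound0 m s n h j r l s0 nE hE _ _); last 2 first.
  - rewrite /mid in hl; lra.
  - rewrite /mid in hl; lra.
  rewrite TE; apply: (arith _ _ _ _ _ _ _ m0 n0 e0 k2 kn k0 msE) => //.
  rewrite /mid in hl; lra.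
have Bk : forall l, l <= mid -> T <= SWDIFF (E k) l.
  move=> l hl.
  have ks0 : 0 <= k%:R * s / 2 by apply: divr_ge0; [apply: mulr_ge0; lra| lra].
  apply: le_trans (boundk m s n h j r k l s0 nE hE _ _); last 2 first.
  - rewrite vkh /mid in hl *; lra.
  - rewrite vkh /mid in hl *; lra.
  rewrite TE; apply: (arith _ _ _ _ _ _ _ m0 n0 e0 k2 kn k0 msE) => //.
  rewrite vkh /mid in hl *; lra.
have mB : forall q, measurable [set l : RB | T <= SWDIFF (E q) l] by move=> q; exact: meas_SW.
have vh : - (m / 2) <= vf m s h.
  rewrite /vf lerDl; apply: mulr_ge0; [by rewrite natr1 ler0n| exact: ltW].
have ks0 : 0 <= k%:R * s / 2 by apply: divr_ge0; [apply: mulr_ge0; lra| lra].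
have midV : mid <= m / 2.
  have hn : (h.+1 <= n)%N by rewrite nE; nlia.
  have : h.+1%:R <= n%:R :> RR by rewrite ler_nat.
  rewrite /mid /vf -natr1 => hh.
  have : (h%:R + 1) * s + k%:R * s / 2 <= (n%:R + k%:R) * s.
    have : (h%:R + 1 + k%:R / 2) * s <= (n%:R + k%:R) * s by rewrite ler_pM2r //; lra.
    have -> : (h%:R + 1) * s + k%:R * s / 2 = (h%:R + 1 + k%:R / 2) * s by field.
    by [].
  rewrite [(n%:R + k%:R) * s]mulrC msE; lra.
have midL : - (m/2) <= mid by rewrite /mid; lra.
have ex3 : 0 <= expR (k%:R * eps) <= 3.
  apply/andP; split; first exact: expR_ge0.
  apply: le_trans e3; rewrite ler_expR; lra.
have := final_step m mid (expR (k%:R * eps)) (M (E 0%N)) (M (E k)) _ _ (mB 0%N) (mB k) midL midV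
  (MV _ (inV 0%N isT)) B0 Bk (fun S mS SV => chain S mS SV k (leqnn k)) ex3.
case=> [|] hh; [exists (E 0%N) | exists (E k)]; (split; [exact: inV | split; [exact: ctm | exact: hh]]).
Qed.
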